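(* Let $N\ge1$, $k\in\mathbb{Z}$, $m\in\mathbb{Z}_{>0}$, $\Gamma\in\{\Gamma_0(N),\Gamma_1(N)\}$, and let $\psi\in J^N_{k,\frac mN}(\Gamma)$ be meromorphic with simple poles at $z=z_s=\alpha\tau+\beta$ for $s=(\alpha,\beta)\in S(\psi)\subset\mathbb{Q}^2$. Then $D_{(\alpha+\lambda,\beta+\mu)}(\tau)=\mathbf{e}(\frac mN(\mu\alpha-\lambda\beta))D_{(\alpha,\beta)}(\tau)$ for $(\lambda,\mu)\in N\mathbb{Z}\times\mathbb{Z}$, and $D_s(\frac{a\tau+b}{c\tau+d})=(c\tau+d)^{k-1}D_{s\gamma}(\tau)$ for $\gamma=\begin{pmatrix}a&b\\c&d\end{pmatrix}\in\Gamma$, where $s\gamma=(a\alpha+c\beta,b\alpha+d\beta)$.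
   Context: $\mathbf{e}(t)=e^{2\pi it}$. $\Gamma_0(N)$: $c\equiv0\bmod N$; $\Gamma_1(N)$: also $a\equiv d\equiv1\bmod N$. $J^N_{k,\frac mN}(\Gamma)$: functions $\psi$ on $\mathbb{H}\times\mathbb{C}$ with $\psi(\frac{a\tau+b}{c\tau+d},\frac z{c\tau+d})=(c\tau+d)^k\mathbf{e}(\frac mN\frac{cz^2}{c\tau+d})\psi(\tau,z)$ for $\gamma\in\Gamma$ and $\psi(\tau,z+\lambda\tau+\mu)=\mathbf{e}(-\frac mN(\lambda^2\tau+2\lambda z+\lambda\mu))\psi(\tau,z)$ for $(\lambda,\mu)\in N\mathbb{Z}\times\mathbb{Z}$. $D_s(\tau)=2\pi i\,\mathbf{e}(\frac mN\alpha z_s)\operatorname{Res}_{z=z_s}\psi(\tau,z)$ for $s\in S(\psi)$. *)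

(* Defs.v *)
From mathcomp Require Import all_boot all_order all_algebra all_classical all_reals all_analysis.
From mathcomp Require Import complex.
Set Implicit Arguments. Unset Strict Implicit. Unset Printing Implicit Defensive.
Import numFieldNormedType.Exports.
Import Order.TTheory GRing.Theory Num.Theory.
Local Open Scope ring_scope.
Local Open Scope classical_set_scope.
Local Open Scope complex_scope.

Notation Cx R := ((R[i])^o).

Section JacobiDefs.
Variable R : realType.

Definition cexp (z : Cx R) : Cx R :=
  let: x +i* y := z in (expR x)%:C * ((cos y)%:C + 'i * (sin y)%:C).

Definition ee (t : Cx R) : Cx R := cexp (2 * (pi : R)%:C * 'i * t).

(* complex differentiability of f : C -> C at x (derivative w.r.t. complex h) *)
Definition cdifferentiable (f : Cx R -> Cx R) (x : Cx R) : Prop :=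
  derivable f x 1.

Definition upper (tau : Cx R) : Prop := let: x +i* y := tau in 0 < y.

Definition qC (q : rat) : Cx R := ratr q.

Definition zs (s : rat * rat) (tau : Cx R) : Cx R := qC s.1 * tau + qC s.2.

Definition poles (S : set (rat * rat)) (tau : Cx R) : set (Cx R) :=
  [set zs s tau | s in S].

Definition simple_res (f : Cx R -> Cx R) (z0 : Cx R) : Cx R :=
  lim ((fun z => (z - z0) * f z) @ z0^').

Definition has_simple_pole (f : Cx R -> Cx R) (z0 : Cx R) : Prop :=
  cvg ((fun z => (z - z0) * f z) @ z0^') /\ simple_res f z0 != 0.

Definition Dres (m N : nat) (psi : Cx R -> Cx R -> Cx R) (s : rat * rat)
    (tau : Cx R) : Cx R :=
  2 * (pi : R)%:C * 'i * ee (m%:R / N%:R * qC s.1 * zs s tau)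
    * simple_res (psi tau) (zs s tau).

Definition mobius (a b c d : int) (tau : Cx R) : Cx R :=
  (a%:~R * tau + b%:~R) / (c%:~R * tau + d%:~R).

End JacobiDefs.
Arguments qC {R}.

Inductive congr_group := Gamma0 | Gamma1.

Definition in_group (G : congr_group) (N : nat) (a b c d : int) : Prop :=
  a * d - b * c = 1 /\ (N%:Z %| c)%Z /\
  match G with
  | Gamma0 => True
  | Gamma1 => (a = 1 %[mod N%:Z])%Z /\ (d = 1 %[mod N%:Z])%Z
  end.

Definition sact (s : rat * rat) (a b c d : int) : rat * rat :=
  (a%:~R * s.1 + c%:~R * s.2, b%:~R * s.1 + d%:~R * s.2).

(* Values of psi at poles are irrelevant, so
   the transformation laws are only required away from the polar sets. *)
Definition meromorphic_jacobi (R : realType) (N : nat) (k : int) (m : nat)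
    (G : congr_group) (S : set (rat * rat)) (psi : Cx R -> Cx R -> Cx R) : Prop :=
  (* polar set is discrete and closed in z, for each tau in H *)
  (forall tau z0 : Cx R, upper tau -> \forall z \near z0^', ~ poles S tau z) /\
  (forall tau z : Cx R, upper tau -> ~ poles S tau z ->
      cdifferentiable (psi tau) z /\ cdifferentiable (fun t => psi t z) tau) /\
  (forall (tau : Cx R) s, upper tau -> S s -> has_simple_pole (psi tau) (zs s tau)) /\
  (forall a b c d : int, in_group G N a b c d ->
    forall tau z : Cx R, upper tau -> ~ poles S tau z ->
      ~ poles S (mobius a b c d tau) (z / (c%:~R * tau + d%:~R)) ->
      psi (mobius a b c d tau) (z / (c%:~R * tau + d%:~R)) =
        (c%:~R * tau + d%:~R) ^ k
        * ee (m%:R / N%:R * (c%:~R * z ^+ 2 / (c%:~R * tau + d%:~R)))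
        * psi tau z) /\
  (forall (lam mu : int), (N%:Z %| lam)%Z ->
    forall tau z : Cx R, upper tau -> ~ poles S tau z ->
      ~ poles S tau (z + lam%:~R * tau + mu%:~R) ->
      psi tau (z + lam%:~R * tau + mu%:~R) =
        ee (- (m%:R / N%:R * (lam%:~R ^+ 2 * tau + 2 * lam%:~R * z + lam%:~R * mu%:~R)))
        * psi tau z).

(* Main.v *)
Require Import Defs.
From mathcomp Require Import all_boot all_order all_algebra all_classical all_reals all_analysis.
From mathcomp Require Import complex.
From mathcomp Require Import ring lra.
Import numFieldNormedType.Exports.
Import Order.TTheory GRing.Theory Num.Theory.
Local Open Scope ring_scope.
Local Open Scope classical_set_scope.
Local Open Scope complex_scope.
Lemma cexpE {R : realType} (x y : R) :
  cexp (x +i* y : Cx R) = (expR x * cos y) +i* (expR x * sin y).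
Proof. rewrite /cexp -[_ * _]/(_ +i* _); congr (_ +i* _); ring. Qed.

Lemma cexpD {R : realType} (z1 z2 : Cx R) : cexp (z1 + z2) = cexp z1 * cexp z2.
Proof.
case: z1 => x1 y1; case: z2 => x2 y2.
rewrite -[(_ +i* _) + (_ +i* _)]/(_ +i* _) !cexpE -[(_ +i* _) * (_ +i* _)]/(_ +i* _).
rewrite expRD cosD sinD; congr (_ +i* _); ring.
Qed.

Lemma cexp0 {R : realType} : cexp (0 : Cx R) = 1.
Proof.
have -> : (0 : Cx R) = 0 +i* 0 by [].
by rewrite cexpE expR0 cos0 sin0 !mulr1 mulr0.
Qed.

Lemma cexp_neq0 {R : realType} (z : Cx R) : cexp z != 0.
Proof.
apply/negP => /eqP h.
have := cexpD z (- z); rewrite subrr cexp0 h mul0r => /eqP.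
by rewrite oner_eq0.
Qed.

Lemma eeD {R : realType} (a b : Cx R) : ee (a + b) = ee a * ee b.
Proof. by rewrite /ee mulrDr cexpD. Qed.

Lemma ee_neq0 {R : realType} (a : Cx R) : ee a != 0.
Proof. exact: cexp_neq0. Qed.

Lemma ReB {R : realType} (a b : Cx R) : complex.Re (a - b) = complex.Re a - complex.Re b.
Proof. by case: a => ? ?; case: b => ? ?. Qed.
Lemma ImB {R : realType} (a b : Cx R) : complex.Im (a - b) = complex.Im a - complex.Im b.
Proof. by case: a => ? ?; case: b => ? ?. Qed.
Lemma ReMc {R : realType} (a b : Cx R) : complex.Re (a * b) = complex.Re a * complex.Re b - complex.Im a * complex.Im b.
Proof. by case: a => ? ?; case: b => ? ?. Qed.
Lemma ImMc {R : realType} (a b : Cx R) : complex.Im (a * b) = complex.Re a * complex.Im b + complex.Im a * complex.Re b.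
Proof. by case: a => ? ?; case: b => ? ?. Qed.
Lemma ReVc {R : realType} (a : Cx R) : complex.Re (a^-1) = complex.Re a / (complex.Re a ^+ 2 + complex.Im a ^+ 2).
Proof. by case: a => ? ?. Qed.
Lemma ImVc {R : realType} (a : Cx R) : complex.Im (a^-1) = - (complex.Im a / (complex.Re a ^+ 2 + complex.Im a ^+ 2)).
Proof. by case: a => ? ?. Qed.
Lemma ReD {R : realType} (a b : Cx R) : complex.Re (a + b) = complex.Re a + complex.Re b.
Proof. by case: a => ? ?; case: b => ? ?. Qed.
Lemma ImD {R : realType} (a b : Cx R) : complex.Im (a + b) = complex.Im a + complex.Im b.
Proof. by case: a => ? ?; case: b => ? ?. Qed.
Lemma intC {R : realType} (a : int) : (a%:~R : Cx R) = (a%:~R : R) +i* 0.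
Proof. by rewrite -[RHS]/((a%:~R : R)%:C) rmorph_int. Qed.
Lemma normC_real {R : realType} (x : R) : `|(x%:C : Cx R)| = `|x|%:C.
Proof. by rewrite normc_def /= expr0n addr0 sqrtr_sqr. Qed.

Lemma normC_ge_Re {R : realType} (x : Cx R) : `|complex.Re x|%:C <= `|x|.
Proof. exact: normc_ge_Re. Qed.

Lemma normC_ge_Im {R : realType} (x : Cx R) : `|complex.Im x|%:C <= `|x|.
Proof.
rewrite normc_def lecR -sqrtr_sqr ler_sqrt ?addr_ge0 ?sqr_ge0 //.
by rewrite lerDr sqr_ge0.
Qed.

Lemma normC_le {R : realType} (x : Cx R) :
  `|x| <= (`|complex.Re x| + `|complex.Im x|)%:C.
Proof.
rewrite normc_def lecR -[X in _ <= X]ger0_norm ?addr_ge0 //.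
rewrite -sqrtr_sqr ler_sqrt ?sqr_ge0 //.
have h1 := normr_ge0 (complex.Re x); have h2 := normr_ge0 (complex.Im x).
rewrite -(real_normK (num_real (complex.Re x))) -(real_normK (num_real (complex.Im x))).
nra.
Qed.

Lemma cvg_Re {R : realType} {T : Type} {F : set_system T} {FF : Filter F}
  (f : T -> Cx R) (l : Cx R) :
  f @ F --> l -> (fun t => complex.Re (f t)) @ F --> complex.Re l.
Proof.
move=> /cvgrPdist_lt H; apply/cvgrPdist_lt => e e0.
have := H e%:C; rewrite ltcR => /(_ e0).
apply: filterS => t; rewrite -ReB => h; rewrite -ltcR.
exact: le_lt_trans (normC_ge_Re _) h.
Qed.

Lemma cvg_Im {R : realType} {T : Type} {F : set_system T} {FF : Filter F}
  (f : T -> Cx R) (l : Cx R) :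
  f @ F --> l -> (fun t => complex.Im (f t)) @ F --> complex.Im l.
Proof.
move=> /cvgrPdist_lt H; apply/cvgrPdist_lt => e e0.
have := H e%:C; rewrite ltcR => /(_ e0).
apply: filterS => t; rewrite -ImB => h; rewrite -ltcR.
exact: le_lt_trans (normC_ge_Im _) h.
Qed.

Lemma cvg_ReIm {R : realType} {T : Type} {F : set_system T} {FF : Filter F}
  (f : T -> Cx R) (l : Cx R) :
  (fun t => complex.Re (f t)) @ F --> complex.Re l ->
  (fun t => complex.Im (f t)) @ F --> complex.Im l ->
  f @ F --> l.
Proof.
move=> /cvgrPdist_lt H1 /cvgrPdist_lt H2; apply/cvgrPdist_lt => e e0.
have eE : e = (complex.Re e)%:C.
  by move: e0; case: e => a b; rewrite ltcE /= => /andP[/eqP -> _].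
have e1 : 0 < complex.Re e / 2.
  by move: e0; rewrite eE ltcR => h; rewrite divr_gt0.
have := H1 _ e1; have := H2 _ e1; apply: filter_app2; apply: filterE => t h2 h1.
apply: le_lt_trans (normC_le _) _.
rewrite eE ltcR ReB ImB.
have -> : complex.Re e = complex.Re e / 2 + complex.Re e / 2 by field.
exact: ltrD.
Qed.
Lemma cexp_cvg {R : realType} (z0 : Cx R) : cexp z @[z --> z0] --> cexp z0.
Proof.
have hRe : forall z : Cx R, complex.Re (cexp z) = expR (complex.Re z) * cos (complex.Im z).
  by case=> x y; rewrite cexpE.
have hIm : forall z : Cx R, complex.Im (cexp z) = expR (complex.Re z) * sin (complex.Im z).
  by case=> x y; rewrite cexpE.
have cRe : complex.Re z @[z --> z0] --> complex.Re z0.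
  by apply: (@cvg_Re R _ (nbhs z0) (nbhs_filter z0) (fun z => z)); exact: cvg_id.
have cIm : complex.Im z @[z --> z0] --> complex.Im z0.
  by apply: (@cvg_Im R _ (nbhs z0) (nbhs_filter z0) (fun z => z)); exact: cvg_id.
apply: (@cvg_ReIm R _ (nbhs z0) (nbhs_filter z0)).
- rewrite hRe; under eq_fun do rewrite hRe.
  apply: (@cvgM _ _ (nbhs z0) _ (fun z => expR (complex.Re z)) (fun z => cos (complex.Im z))).
  + exact: (continuous_cvg _ (@continuous_expR R _) cRe).
  + exact: (continuous_cvg _ (@continuous_cos R _) cIm).
- rewrite hIm; under eq_fun do rewrite hIm.
  apply: (@cvgM _ _ (nbhs z0) _ (fun z => expR (complex.Re z)) (fun z => sin (complex.Im z))).
  + exact: (continuous_cvg _ (@continuous_expR R _) cRe).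
  + exact: (continuous_cvg _ (@continuous_sin R _) cIm).
Qed.

Lemma ee_cvg {R : realType} {T : Type} {F : set_system T} {FF : Filter F}
  (f : T -> Cx R) (l : Cx R) : f @ F --> l -> ee (f t) @[t --> F] --> ee l.
Proof.
move=> hf; rewrite /ee.
apply: (cvg_comp _ _ _ (cexp_cvg _)).
apply: cvgM; [exact: cvg_cst | exact: hf].
Qed.

Lemma dnbhs_aff {R : realType} (a b x y : Cx R) : a != 0 -> a * x + b = y ->
  (a * w + b) @[w --> x^'] --> y^'.
Proof.
move=> a0 hy P; rewrite /dnbhs /within /= => HP.
have hc : (a * w + b) @[w --> x] --> y.
  rewrite -hy; apply: (@cvgD _ _ _ (nbhs x) _ (fun w => a * w) (fun _ => b)); last exact: cvg_cst.
  apply: (@cvgM _ _ (nbhs x) _ (fun _ => a) (fun w => w)); [exact: cvg_cst | exact: cvg_id].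
have H := hc _ HP.
have sub : (fun w => a * w + b) @^-1` (fun t => t != y -> P t) `<=`
  (fun w => w != x -> P (a * w + b)).
  move=> w /= Hw wx; apply: Hw.
  rewrite -hy; apply: contra wx => /eqP h; apply/eqP.
  by apply: (mulfI a0); apply: (addIr b).
exact: (@filterS _ (nbhs x) (nbhs_filter x) _ _ sub H).
Qed.
Lemma upperE {R : realType} (z : Cx R) : upper z = (0 < complex.Im z).
Proof. by case: z. Qed.

Lemma mobius_upper {R : realType} (a b c d : int) (t : Cx R) :
  a * d - b * c = 1 -> upper t ->
  upper (mobius a b c d t) /\ (c%:~R * t + d%:~R != 0 :> Cx R).
Proof.
move=> h; case: t => x y; rewrite [upper (_ +i* _)]upperE /= => y0.
have hR : (a%:~R * d%:~R - b%:~R * c%:~R : R) = 1.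
  by rewrite -!intrM -intrB h.
rewrite /mobius upperE.
set X := (c%:~R * (x +i* y) + d%:~R : Cx R).
have ReX : complex.Re X = c%:~R * x + d%:~R.
  by rewrite /X ReD ReMc !intC /=; ring.
have ImX : complex.Im X = c%:~R * y.
  by rewrite /X ImD ImMc !intC /=; ring.
clearbody X.
have nX : 0 < complex.Re X ^+ 2 + complex.Im X ^+ 2.
  have [c0|c0] := eqVneq (c%:~R : R) 0.
    have d0 : complex.Re X != 0.
      rewrite ReX c0 mul0r add0r; apply/eqP => d0.
      by move: hR; rewrite d0 c0 !mulr0 subr0 => /eqP; rewrite eq_sym oner_eq0.
    have h1 : 0 < complex.Re X ^+ 2 by rewrite exprn_even_gt0.
    have := sqr_ge0 (complex.Im X); lra.
  have i0 : complex.Im X != 0 by rewrite ImX mulf_neq0 // gt_eqF.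
  have h1 : 0 < complex.Im X ^+ 2 by rewrite exprn_even_gt0.
  have := sqr_ge0 (complex.Re X); lra.
split; last first.
  apply/eqP => X0; move: nX; rewrite X0 /= expr0n /= addr0 ltxx //.
rewrite ImMc ImVc ReVc ReD ImD ReMc ImMc !intC /=.
set n := complex.Re X ^+ 2 + complex.Im X ^+ 2.
have -> : (a%:~R * x - 0 * y + b%:~R) * - (complex.Im X / n) +
  (a%:~R * y + 0 * x + 0) * (complex.Re X / n) = y / n.
  have n0 : n != 0 := lt0r_neq0 nX.
  rewrite -[y in RHS]mulr1 -[in y * 1]hR.
  move: n0; rewrite /n ReX ImX => n0.
  by field.
by rewrite divr_gt0.

Qed.
Lemma dn_of_n {R : realType} (f : Cx R -> Cx R) (x l : Cx R) :
  f w @[w --> x] --> l -> f w @[w --> x^'] --> l.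
Proof.
move=> h P /h; rewrite /dnbhs /within /=.
by apply: (@filterS _ (nbhs x) (nbhs_filter x)) => w Pw _.
Qed.

Lemma cvg_quad {R : realType} (a b c x : Cx R) :
  (a * (w * w) + b * w + c) @[w --> x] --> a * (x * x) + b * x + c.
Proof.
have hid : (fun w : Cx R => w) @ x --> x := cvg_id.
have hc : forall e : Cx R, (fun _ : Cx R => e) @ x --> e := fun e => cvg_cst e.
apply: (@cvgD _ _ _ (nbhs x) _ (fun w => a * (w * w) + b * w) (fun _ => c)); last exact: cvg_cst.
apply: (@cvgD _ _ _ (nbhs x) _ (fun w => a * (w * w)) (fun w => b * w)).
- apply: (@cvgM _ _ (nbhs x) _ (fun _ => a) (fun w => w * w)); first exact: cvg_cst.
  exact: (@cvgM _ _ (nbhs x) _ (fun w => w) (fun w => w)).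
- apply: (@cvgM _ _ (nbhs x) _ (fun _ => b) (fun w => w)); first exact: cvg_cst.
  exact: cvg_id.
Qed.
Lemma qCD {R : realType} (q : rat) (n : int) : qC (q + n%:~R) = qC q + (n%:~R : Cx R).
Proof. by rewrite /qC rmorphD /= ratr_int. Qed.

Lemma part1 {R : realType} (N : nat) (k : int) (m : nat)
    (G : congr_group) (S : set (rat * rat)) (psi : Cx R -> Cx R -> Cx R) :
  meromorphic_jacobi N k m G S psi ->
  (forall (s : rat * rat) (lam mu : int) (tau : Cx R),
      S s -> (N%:Z %| lam)%Z -> upper tau ->
      Dres m N psi (s.1 + lam%:~R, s.2 + mu%:~R) tau =
        ee (m%:R / N%:R * (mu%:~R * qC s.1 - lam%:~R * qC s.2)) * Dres m N psi s tau).
Proof.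
move=> [H1 [_ [H3 [_ H5]]]] s lam mu tau Ss Nl up.
set p := zs s tau.
set l : Cx R := lam%:~R; set u : Cx R := mu%:~R.
set sh := l * tau + u.
set K : Cx R := m%:R / N%:R.
have hp' : zs (s.1 + lam%:~R, s.2 + mu%:~R) tau = p + sh.
  by rewrite /zs /= !qCD /p /zs /sh; ring.
set F := fun z => (z - p) * psi tau z.
set E := fun z => ee (- (K * (l ^+ 2 * tau + 2 * l * z + l * u))).
have [cF _] := H3 tau s up Ss.
set L := lim (F z @[z --> p^']).
have cF' : F z @[z --> p^'] --> L by exact: cF.
have hmap : (1 * w + - sh) @[w --> (p + sh)^'] --> p^'.
  by apply: dnbhs_aff; [exact: oner_neq0 | rewrite mul1r addrK].
have ev : \forall w \near (p + sh)^',
    E (1 * w + - sh) * F (1 * w + - sh) = (w - (p + sh)) * psi tau w.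
  apply: (filterS2 _ _ (H1 tau (p + sh) up) (hmap _ (H1 tau p up))).
  move=> w np1 np2 /=.
  have {}np2 : ~ poles S tau (w - sh) by move: np2; rewrite /preimage /= mul1r.
  rewrite !mul1r.
  have np2' : ~ poles S tau (w - sh + lam%:~R * tau + mu%:~R).
    by rewrite -/l -/u -addrA -/sh subrK.
  have := H5 lam mu Nl tau (w - sh) up np2 np2'.
  rewrite -/l -/u -addrA -/sh subrK => ->.
  rewrite /E /F /K mulrCA; congr (_ * _).
  by rewrite [in RHS]opprD [in RHS]addrA addrAC.
have hG : (w - (p + sh)) * psi tau w @[w --> (p + sh)^'] --> E p * L.
  apply: cvg_trans (near_eq_cvg ev) _. 
  apply: (@cvgM _ _ ((p + sh)^') _ (fun w => E (1 * w + - sh)) (fun w => F (1 * w + - sh))).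
  - apply: dn_of_n.
    have -> : (fun w => E (1 * w - sh)) = (fun w => ee (0 * (w * w) + (- (K * (2 * l))) * w +
        (- (K * (l ^+ 2 * tau - 2 * l * sh + l * u))))).
      by apply: funext => w; rewrite /E; congr ee; ring.
    have -> : E p = ee (0 * ((p + sh) * (p + sh)) + (- (K * (2 * l))) * (p + sh) +
        (- (K * (l ^+ 2 * tau - 2 * l * sh + l * u)))).
      by rewrite /E; congr ee; ring.
    exact: ee_cvg (cvg_quad _ _ _ _).
  - have h1 := cvg_app F hmap.
    exact: (cvg_trans h1 cF').
have hres : simple_res (psi tau) (p + sh) = E p * L.
  exact: (cvg_lim (@norm_hausdorff _ _) hG).
rewrite /Dres hp' hres /= qCD.
have -> : simple_res (psi tau) (zs s tau) = L by [].
rewrite -/p /E.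
rewrite -/K -/l.
have key : ee (K * (qC s.1 + l) * (p + sh)) * ee (- (K * (l ^+ 2 * tau + 2 * l * p + l * u)))
    = ee (K * (u * qC s.1 - l * qC s.2)) * ee (K * qC s.1 * p).
  rewrite -!eeD; congr ee; rewrite /p /sh /zs; ring.
set A := ee (K * (qC s.1 + l) * (p + sh)).
set B := ee (- (K * (l ^+ 2 * tau + 2 * l * p + l * u))).
set D := ee (K * (u * qC s.1 - l * qC s.2)).
set E' := ee (K * qC s.1 * p).
set C := 2 * pi%:C * 'i.
transitivity (C * (A * B) * L); first by ring.
rewrite key -/D -/E'; ring.
Qed.
Lemma qCsact1 {R : realType} (s : rat * rat) (a b c d : int) :
  qC (sact s a b c d).1 = (a%:~R * qC s.1 + c%:~R * qC s.2 : Cx R).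
Proof. by rewrite /qC /sact /= rmorphD !rmorphM /= !ratr_int. Qed.
Lemma qCsact2 {R : realType} (s : rat * rat) (a b c d : int) :
  qC (sact s a b c d).2 = (b%:~R * qC s.1 + d%:~R * qC s.2 : Cx R).
Proof. by rewrite /qC /sact /= rmorphD !rmorphM /= !ratr_int. Qed.

Lemma part2 {R : realType} (N : nat) (k : int) (m : nat)
    (G : congr_group) (S : set (rat * rat)) (psi : Cx R -> Cx R -> Cx R) :
  meromorphic_jacobi N k m G S psi ->
  (forall (a b c d : int) (s : rat * rat) (tau : Cx R),
      in_group G N a b c d -> S s -> upper tau ->
      Dres m N psi s (mobius a b c d tau) =
        (c%:~R * tau + d%:~R) ^ (k - 1) * Dres m N psi (sact s a b c d) tau).
Proof.
move=> [H1 [_ [H3 [H4 _]]]] a b c d s tau hg Ss up.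
have hdet : a * d - b * c = 1 by case: hg.
have [up' X0] := @mobius_upper R a b c d tau hdet up.
have detC : (a%:~R * d%:~R - b%:~R * c%:~R : Cx R) = 1.
  by rewrite -!intrM -intrB hdet.
set K : Cx R := m%:R / N%:R.
set al : Cx R := qC s.1; set be : Cx R := qC s.2.
set t' := mobius a b c d tau.
set p := zs s t'.
set q := zs (sact s a b c d) tau.
have hqE : q = (a%:~R * al + c%:~R * be) * tau + (b%:~R * al + d%:~R * be).
  by rewrite /q /zs qCsact1 qCsact2.
have hpq : (c%:~R * tau + d%:~R)^-1 * q + 0 = p.
  rewrite /p /zs /t' /mobius hqE -/al -/be.
  by field.
set X := c%:~R * tau + d%:~R.
set F := fun z => (z - p) * psi t' z.
have [cF _] := H3 t' s up' Ss.
set L := lim (F z @[z --> p^']).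
have cF' : F z @[z --> p^'] --> L by exact: cF.
have hmap : (X^-1 * w + 0) @[w --> q^'] --> p^'.
  by apply: dnbhs_aff; [rewrite invr_eq0 | exact: hpq].
set Ew := fun w => ee (K * (c%:~R * w ^+ 2 / X)).
set M := fun w => X ^ (k - 1) * Ew w.
have M0 : forall w, M w != 0.
  by move=> w; rewrite /M mulf_neq0 ?expfz_neq0 ?ee_neq0.
have ev : \forall w \near q^', (M w)^-1 * F (X^-1 * w + 0) = (w - q) * psi tau w.
  apply: (filterS2 _ _ (H1 tau q up) (hmap _ (H1 t' p up'))).
  move=> w np1 np2 /=.
  have {}np2 : ~ poles S t' (w / X) by move: np2; rewrite /preimage /= addr0 mulrC.
  rewrite addr0 [X^-1 * w]mulrC /F.
  have := H4 a b c d hg tau w up np1 np2.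
  rewrite -/t' -/X -/K => ->.
  have Xk : X ^ k = X ^ (k - 1) * X.
    by rewrite -[X in _ * X]expr1z -expfzDr // subrK.
  have Y0 : X ^ (k - 1) != 0 := expfz_neq0 _ X0.
  have e0 : Ew w != 0 := ee_neq0 _.
  rewrite -[ee _]/(Ew w) /M Xk -hpq addr0.
  move: Y0 e0 X0; rewrite -/X; clearbody Ew X; set Y := X ^ (k - 1) => Y0 e0 X0.
  clearbody Y.
  by field; rewrite X0 e0 Y0.
have hG : (w - q) * psi tau w @[w --> q^'] --> (M q)^-1 * L.
  apply: cvg_trans (near_eq_cvg ev) _.
  apply: (@cvgM _ _ (q^') _ (fun w => (M w)^-1) (fun w => F (X^-1 * w + 0))).
  - apply: dn_of_n.
    apply: (@cvgV _ _ (nbhs q) _ M); first exact: M0.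
    apply: (@cvgM _ _ (nbhs q) _ (fun _ => X ^ (k - 1)) Ew); first exact: cvg_cst.
    have -> : Ew = (fun w => ee ((K * c%:~R / X) * (w * w) + 0 * w + 0)).
      by apply: funext => w; rewrite /Ew; congr ee; rewrite expr2; ring.
    exact: ee_cvg (cvg_quad _ _ _ _).
  - have h1 := cvg_app F hmap.
    exact: (cvg_trans h1 cF').
have hres : simple_res (psi tau) q = (M q)^-1 * L.
  exact: (cvg_lim (@norm_hausdorff _ _) hG).
rewrite /Dres hres -/q qCsact1.
have -> : simple_res (psi t') (zs s t') = L by [].
rewrite -/p -/K -/al -/be.
have key : ee (K * al * p) * Ew q = ee (K * (a%:~R * al + c%:~R * be) * q).
  rewrite /Ew -eeD; congr ee; apply/eqP; rewrite -subr_eq0.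
  rewrite (_ : _ - _ = K * q * al * (1 - (a%:~R * d%:~R - b%:~R * c%:~R)) / X).
    by rewrite detC subrr mulr0 mul0r.
  rewrite -hpq addr0 hqE; move: X0; rewrite /X => X0'.
  by field.
rewrite -key /M.
have Y0 : X ^ (k - 1) != 0 := expfz_neq0 _ X0.
have e0 : Ew q != 0 := ee_neq0 _.
move: Y0 e0; set Y := X ^ (k - 1); set E := Ew q; set A := ee _; set C := 2 * _ * _.
move=> Y0 e0; clearbody Y E A C.
by field; rewrite ?Y0 ?e0.
Qed.

Theorem proposition4p3 (R : realType) (N : nat) (k : int) (m : nat)
    (G : congr_group) (S : set (rat * rat)) (psi : Cx R -> Cx R -> Cx R) :
  (1 <= N)%N -> (0 < m)%N ->
  meromorphic_jacobi N k m G S psi ->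
  (forall (s : rat * rat) (lam mu : int) (tau : Cx R),
      S s -> (N%:Z %| lam)%Z -> upper tau ->
      Dres m N psi (s.1 + lam%:~R, s.2 + mu%:~R) tau =
        ee (m%:R / N%:R * (mu%:~R * qC s.1 - lam%:~R * qC s.2)) * Dres m N psi s tau) /\
  (forall (a b c d : int) (s : rat * rat) (tau : Cx R),
      in_group G N a b c d -> S s -> upper tau ->
      Dres m N psi s (mobius a b c d tau) =
        (c%:~R * tau + d%:~R) ^ (k - 1) * Dres m N psi (sact s a b c d) tau).
Proof.
move=> _ _ hmj; split; [exact: part1 hmj | exact: part2 hmj].
Qed.
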